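(* For $\vec\mu\in\mathbb{R}^k$ and $\vec v\in(\mathbb{R}^{\ge0})^k$, let $f(\vec\mu,\vec v)$ be the supremum of $\mathbb{E}[\max_{j<k}\vec x(j)]$ over all random vectors $\vec x$ in $\mathbb{R}^k$ with $\mathbb{E}[\vec x]=\vec\mu$ and $\mathrm{Var}(\vec x(j))=\vec v(j)^2$ for all $j<k$. Then for every $\vec\mu\in\mathbb{R}^k$, $\vec v\in(\mathbb{R}^{\ge0})^k$: (1) $\max_{j<k}\vec\mu(j)\le f(\vec\mu,\vec v)\le\max_{j<k}\vec\mu(j)+\frac12\sum_{j<k}\vec v(j)$; (2) if $\vec\mu_i\in\mathbb{R}^k,\vec v_i\in(\mathbb{R}^{\ge0})^k$ for $i\in\{0,1\}$ satisfy $\vec\mu=\frac12(\vec\mu_0+\vec\mu_1)$ and $\vec v(j)^2=\frac12\sum_{i\in 2}\big[\vec v_i(j)^2+(\vec\mu_i(j)-\vec\mu(j))^2\big]$ for all $j<k$, then $\frac12\big(f(\vec\mu_0,\vec v_0)+f(\vec\mu_1,\vec v_1)\big)\le f(\vec\mu,\vec v)$. *)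

(* Defs.v *)
From HB Require Import structures.
From mathcomp Require Import all_boot all_order all_algebra.
From mathcomp Require Import all_classical all_reals all_analysis.
Set Implicit Arguments. Unset Strict Implicit. Unset Printing Implicit Defensive.
Import Order.TTheory GRing.Theory Num.Theory.
Local Open Scope ring_scope.

(* maximum of the coordinates of a vector x in R^n (meaningful for n > 0) *)
Definition maxv (R : realType) (n : nat) (x : 'I_n -> R) : R :=
  fine (\big[Order.max/-oo%E]_(j < n) (x j)%:E).

Definition fmax (R : realType) (n : nat) (mu v : 'I_n -> R) : \bar R :=
  ereal_sup [set e | exists (d : measure_display) (T : measurableType d)
      (P : probability T R) (X : 'I_n -> {RV P >-> R}),
      (forall j, (X j : T -> R) \in Lfun P 2%:E) /\
      (forall j, ('E_P[X j] = (mu j)%:E)%E) /\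
      (forall j, ('V_P[X j] = (v j ^+ 2)%:E)%E) /\
      (e = 'E_P[fun w => maxv (fun j => X j w)])%E].

(* Main.v *)
Require Import Defs.
From HB Require Import structures.
From mathcomp Require Import all_boot all_order all_algebra.
From mathcomp Require Import all_classical all_reals all_analysis.
From mathcomp Require Import ring lra measurable_realfun.
Set Implicit Arguments. Unset Strict Implicit. Unset Printing Implicit Defensive.
Import Order.TTheory GRing.Theory Num.Theory.
Local Open Scope ring_scope.
Local Open Scope classical_set_scope.

Section sumtype.
Context d0 d1 (T0 : measurableType d0) (T1 : measurableType d1).
Definition sumT := (T0 + T1)%type.
HB.instance Definition _ := Choice.on sumT.
HB.instance Definition _ := isPointed.Build sumT (inl point).
Definition sum_meas : set (set sumT) :=
  [set A | measurable (@inl T0 T1 @^-1` A) /\ measurable (@inr T0 T1 @^-1` A)].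
Lemma sum_meas0 : sum_meas set0.
Proof. by split; rewrite preimage_set0. Qed.
Lemma sum_measC A : sum_meas A -> sum_meas (~` A).
Proof. by move=> [h0 h1]; split; rewrite preimage_setC; apply: measurableC. Qed.
Lemma sum_measU (F : (set sumT)^nat) : (forall i, sum_meas (F i)) -> sum_meas (\bigcup_i F i).
Proof. by move=> h; split; rewrite preimage_bigcup; apply: bigcupT_measurable => i; case: (h i). Qed.
HB.instance Definition _ := @isMeasurable.Build default_measure_display sumT sum_meas
  sum_meas0 sum_measC sum_measU.
Lemma measurable_inl : measurable_fun setT (@inl T0 T1 : T0 -> sumT).
Proof. by move=> _ A [h0 h1]; rewrite setTI. Qed.
Lemma measurable_inr : measurable_fun setT (@inr T0 T1 : T1 -> sumT).
Proof. by move=> _ A [h0 h1]; rewrite setTI. Qed.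
End sumtype.

Section mix.
Context d0 d1 (T0 : measurableType d0) (T1 : measurableType d1) (R : realType).
Variables (P0 : probability T0 R) (P1 : probability T1 R).
Definition half : {nonneg R} := (2^-1)%:nng.

Let pm0 := measure_function_pushforward__canonical__measure_function_Measure P0 (@measurable_inl _ _ T0 T1).
Let pm1 := measure_function_pushforward__canonical__measure_function_Measure P1 (@measurable_inr _ _ T0 T1).
Definition mixP : set (sumT T0 T1) -> \bar R := measure_add (mscale half pm0) (mscale half pm1).
HB.instance Definition _ := Measure.copy mixP (measure_add (mscale half pm0) (mscale half pm1)).
Lemma mixPE A : mixP A = ((2^-1)%:E * P0 (inl @^-1` A) + (2^-1)%:E * P1 (inr @^-1` A))%E.
Proof. by rewrite /mixP measure_addE. Qed.
Lemma mixP_setT : mixP setT = 1%E.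
Proof.
rewrite mixPE !preimage_setT !probability_setT.
by rewrite !mule1 -EFinD; congr EFin; field.
Qed.
HB.instance Definition _ := Measure_isProbability.Build _ _ _ mixP mixP_setT.

Local Open Scope ereal_scope.
Lemma mix_ge0 (f : sumT T0 T1 -> \bar R) : measurable_fun [set: sumT T0 T1] f -> (forall x, 0 <= f x) ->
  \int[mixP]_x f x = (2^-1)%:E * \int[P0]_x f (inl x) + (2^-1)%:E * \int[P1]_x f (inr x).
Proof.
move=> mf f0.
rewrite ge0_integral_measure_add//.
rewrite !ge0_integral_mscale//.
rewrite !ge0_integral_pushforward// ?preimage_setT//.
- exact: measurable_inr.
- exact: measurable_inl.
Qed.

Lemma mix_int (g : sumT T0 T1 -> R) : measurable_fun setT g ->
  P0.-integrable setT ((EFin \o g) \o inl) -> P1.-integrable setT ((EFin \o g) \o inr) ->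
  \int[mixP]_x (g x)%:E = (2^-1)%:E * (\int[P0]_x (g (inl x))%:E + \int[P1]_x (g (inr x))%:E).
Proof.
move=> mg i0 i1.
have mG : measurable_fun setT (EFin \o g) by exact/measurable_EFinP.
have -> : \int[P0]_x (g (inl x))%:E = \int[P0]_x (EFin \o g)^\+ (inl x) - \int[P0]_x (EFin \o g)^\- (inl x).
  by rewrite integralE; congr (_ - _); apply: eq_integral => x _; rewrite !unlock.
have -> : \int[P1]_x (g (inr x))%:E = \int[P1]_x (EFin \o g)^\+ (inr x) - \int[P1]_x (EFin \o g)^\- (inr x).
  by rewrite integralE; congr (_ - _); apply: eq_integral => x _; rewrite !unlock.
rewrite integralE (mix_ge0 (measurable_funepos mG)); last by move=> x; exact: funepos_ge0.
rewrite (mix_ge0 (measurable_funeneg mG)); last by move=> x; exact: funeneg_ge0.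
have : \int[P0]_x (EFin \o g)^\+ (inl x) \is a fin_num.
  by have := integrable_fin_num measurableT (integrable_funepos measurableT i0); rewrite funepos_comp.
have : \int[P0]_x (EFin \o g)^\- (inl x) \is a fin_num.
  by have := integrable_fin_num measurableT (integrable_funeneg measurableT i0); rewrite funeneg_comp.
have : \int[P1]_x (EFin \o g)^\+ (inr x) \is a fin_num.
  by have := integrable_fin_num measurableT (integrable_funepos measurableT i1); rewrite funepos_comp.
have : \int[P1]_x (EFin \o g)^\- (inr x) \is a fin_num.
  by have := integrable_fin_num measurableT (integrable_funeneg measurableT i1); rewrite funeneg_comp.
move: (\int[P0]_x (EFin \o g)^\+ (inl x)) (\int[P0]_x (EFin \o g)^\- (inl x)).
move: (\int[P1]_x (EFin \o g)^\+ (inr x)) (\int[P1]_x (EFin \o g)^\- (inr x)) => c e a b.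
move=> /fineK <- /fineK <- /fineK <- /fineK <-.
move: (fine a) (fine b) (fine c) (fine e) => {}a {}b {}c {}e.
rewrite -!EFinM; do 3 rewrite -?EFinB -?EFinD. congr EFin; ring.
Qed.

Lemma mix_L2 (g : sumT T0 T1 -> R) : measurable_fun setT g ->
  (g \o inl) \in Lfun P0 2%:E -> (g \o inr) \in Lfun P1 2%:E -> g \in Lfun mixP 2%:E.
Proof.
move=> mg h0 h1.
rewrite inE; apply/andP; split; first by rewrite inE.
rewrite inE /= /finite_norm unlock /Lnorm.
apply: poweR_lty.
have mG : measurable_fun setT (fun x => (`|g x| `^ 2)%:E).
  apply/measurable_EFinP; apply: (measurableT_comp (measurable_powR _)).
  exact: measurableT_comp.
under eq_integral => x _ do rewrite (_ : `|(EFin \o g) x| `^ 2 = (`|g x| `^ 2)%:E)//.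
rewrite (mix_ge0 mG); last by move=> x; rewrite lee_fin powR_ge0.
have /integrable_lty i0 := Lfun_integrable (ler1n _ 2) h0.
have /integrable_lty i1 := Lfun_integrable (ler1n _ 2) h1.
by rewrite lte_add_pinfty// lte_mul_pinfty// ?i0 ?i1. 
Qed.

End mix.

Section maxv_lemmas.
Context (R : realType) (n : nat) (hn : (0 < n)%N).
Local Open Scope ereal_scope.

Lemma maxv_ex (x : 'I_n -> R) : exists j, maxv x = x j.
Proof.
have [i _ E] := @eq_bigmax _ _ _ -oo%E (Ordinal hn) xpredT (fun j => (x j)%:E) isT (fun i _ => leNye _).
by exists i; rewrite /maxv E.
Qed.

Lemma maxv_ge (x : 'I_n -> R) j : (x j <= maxv x)%R.
Proof.
have [i _ E] := @eq_bigmax _ _ _ -oo%E (Ordinal hn) xpredT (fun j => (x j)%:E) isT (fun i _ => leNye _).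
rewrite /maxv E /= -lee_fin -E; exact: le_bigmax.
Qed.

Lemma maxv_le (x : 'I_n -> R) c : (forall j, x j <= c)%R -> (maxv x <= c)%R.
Proof. by move=> h; have [i ->] := maxv_ex x. Qed.
End maxv_lemmas.

Lemma measurable_bigmaxe d (T : measurableType d) (R : realType) (I : Type) (s : seq I)
  (F : I -> T -> \bar R) : (forall i, measurable_fun setT (F i)) ->
  measurable_fun setT (fun w => \big[Order.max/-oo%E]_(i <- s) F i w).
Proof.
move=> mF; elim: s => [|a s IH].
  under eq_fun do rewrite big_nil. exact: measurable_cst.
under eq_fun do rewrite big_cons. exact: measurable_maxe.
Qed.

Lemma measurable_maxv d (T : measurableType d) (R : realType) n (F : 'I_n -> T -> R) :
  (forall i, measurable_fun setT (F i)) -> measurable_fun setT (fun w => maxv (fun j => F j w)).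
Proof.
move=> mF; apply: (measurableT_comp (fine_measurable measurableT)).
apply: measurable_bigmaxe => i; exact/measurable_EFinP.
Qed.

Section maxv_int.
Context d (T : measurableType d) (R : realType) (P : probability T R) n (hn : (0 < n)%N).
Variable X : 'I_n -> T -> R.
Hypothesis X1 : forall j, X j \in Lfun P 1.
Lemma maxv_int : P.-integrable setT (EFin \o (fun w => maxv (fun j => X j w))).
Proof.
have mX j : measurable_fun setT (X j).
  by have := X1 j; rewrite inE => /andP[]; rewrite inE.
have G1 : (\sum_j (Num.norm \o X j)) \in Lfun P 1.
  by apply: rpred_sum => j _; exact: Lfun_norm.
move/Lfun1_integrable : G1 => G1.
apply: le_integrable G1 => //.
  by apply/measurable_EFinP; exact: measurable_maxv.
move=> w _ /=; rewrite fct_sumE lee_fin /=.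
have [i ->] := maxv_ex hn (fun j => X j w).
by rewrite [leRHS]ger0_norm ?sumr_ge0// (bigD1 i) //= lerDl sumr_ge0.
Qed.
End maxv_int.

Section Lfun_helpers.
Context d (T : measurableType d) (R : realType) (mu : {measure set T -> \bar R}).
Local Open Scope ereal_scope.
Lemma L1D (f g : T -> R) : f \in Lfun mu 1 -> g \in Lfun mu 1 -> (f + g)%R \in Lfun mu 1.
Proof. by move=> hf hg; rewrite rpredD// => ?. Qed.
Lemma L1B (f g : T -> R) : f \in Lfun mu 1 -> g \in Lfun mu 1 -> (f - g)%R \in Lfun mu 1.
Proof. by move=> hf hg; rewrite rpredB// => ?. Qed.
Lemma L2D (f g : T -> R) : f \in Lfun mu 2%:E -> g \in Lfun mu 2%:E -> (f + g)%R \in Lfun mu 2%:E.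
Proof. by move=> hf hg; rewrite rpredD ?lee1n// => ?. Qed.
Lemma L2B (f g : T -> R) : f \in Lfun mu 2%:E -> g \in Lfun mu 2%:E -> (f - g)%R \in Lfun mu 2%:E.
Proof. by move=> hf hg; rewrite rpredB ?lee1n// => ?. Qed.
Lemma L1Z a (f : T -> R) : f \in Lfun mu 1 -> (a \o* f)%R \in Lfun mu 1.
Proof. by move=> hf; rewrite Lfun_scale. Qed.
Lemma L1sum I (s : seq I) (F : I -> T -> R) : (forall i, F i \in Lfun mu 1) ->
  (\sum_(i <- s) F i)%R \in Lfun mu 1.
Proof. by move=> hF; rewrite rpred_sum// => i _ ?. Qed.
End Lfun_helpers.

Section moments.
Context d (T : measurableType d) (R : realType) (P : probability T R).
Variables (Y : T -> R) (m s : R).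
Local Open Scope ereal_scope.
Hypotheses (Y2 : Y \in Lfun P 2%:E) (EY : 'E_P[Y] = m%:E) (VY : 'V_P[Y] = s%:E).
Local Open Scope ereal_scope.

Lemma Pfin : P setT \is a fin_num.
Proof. exact: fin_num_measure. Qed.

Lemma centered2 : 'E_P[(Y - cst m) * (Y - cst m)]%R = s%:E.
Proof. by move: VY; rewrite /variance covariance.unlock EY => h; exact: h. Qed.

Lemma centered1 : 'E_P[(Y - cst m)]%R = 0.
Proof.
have Y1 := Lfun_subset12 Pfin Y2.
by rewrite expectationB ?Lfun_cst// EY expectation_cst subee.
Qed.

Lemma second_moment a : 'E_P[(Y - cst a) * (Y - cst a)]%R = (s + (m - a)^+2)%:E.
Proof.
have Y1 := Lfun_subset12 Pfin Y2.
have Ym2 : (Y - cst m)%R \in Lfun P 2%:E by rewrite L2B ?Lfun_cst.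
have Ym1 : (Y - cst m)%R \in Lfun P 1 by rewrite L1B ?Lfun_cst.
have -> : ((Y - cst a) * (Y - cst a) = (Y - cst m) * (Y - cst m)
   + (2 * (m - a)) \o* (Y - cst m) + cst ((m - a) ^+ 2))%R.
  by apply/funext => w /=; rewrite !fctE /=; ring.
rewrite expectationD ?Lfun_cst//; last first.
  by apply: L1D; [exact: Lfun2_mul_Lfun1 | exact: L1Z].
rewrite expectationD ?Lfun2_mul_Lfun1// ?L1Z//.
  rewrite centered2 expectationZl// centered1 mule0 adde0 expectation_cst//.
exact: Lfun_cst.
Qed.
End moments.

Lemma hbound (R : realType) (c y : R) : 0 < c ->
  0 <= y * y * (4 * c)^-1 + y * 2^-1 + c / 4 /\ y <= y * y * (4 * c)^-1 + y * 2^-1 + c / 4.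
Proof.
move=> c0; have c0' : c != 0 by rewrite gt_eqF.
have E1 : y * y * (4 * c)^-1 + y * 2^-1 + c / 4 = (y + c) ^+ 2 / (4 * c) by field.
have E2 : y * y * (4 * c)^-1 + y * 2^-1 + c / 4 - y = (y - c) ^+ 2 / (4 * c) by field.
split; first by rewrite E1 divr_ge0 ?sqr_ge0// mulr_ge0// ltW.
by rewrite -subr_ge0 E2 divr_ge0 ?sqr_ge0// mulr_ge0// ltW.
Qed.

Lemma termbound (R : realType) (v eps : R) : 0 <= v -> 0 < eps ->
  (4 * (v + eps))^-1 * v ^+ 2 + (v + eps) / 4 <= v / 2 + eps / 4.
Proof.
move=> v0 e0; have ve : v + eps != 0 by rewrite gt_eqF//; lra.
have k : (4 * (v + eps))^-1 * v ^+ 2 = v / 4 - (v * eps) / (4 * (v + eps)) by field.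
have : 0 <= (v * eps) / (4 * (v + eps)).
  by apply: divr_ge0; apply: mulr_ge0 => //; lra.
rewrite k; lra.
Qed.

Section boundC.
Context d (T : measurableType d) (R : realType) (P : probability T R) n (hn : (0 < n)%N).
Variables (X : 'I_n -> T -> R) (mu v : 'I_n -> R).
Local Open Scope ereal_scope.
Hypotheses (hv : forall j, (0 <= v j)%R) (X2 : forall j, X j \in Lfun P 2%:E)
  (EX : forall j, 'E_P[X j] = (mu j)%:E) (VX : forall j, 'V_P[X j] = (v j ^+ 2)%:E).

Lemma boundC : exists r, 'E_P[fun w => maxv (fun j => X j w)] = r%:E /\
  (maxv mu <= r <= maxv mu + 2^-1 * \sum_(j < n) v j)%R.
Proof.
have X1 j := Lfun_subset12 (Pfin P) (X2 j).
set M := fun w => maxv (fun j => X j w).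
have iM : P.-integrable setT (EFin \o M) := @maxv_int _ _ _ P _ hn _ X1.
have M1 : M \in Lfun P 1 by apply/Lfun1_integrable.
have EM := fineK (expectation_fin_num M1).
exists (fine 'E_P[M]); split; first by rewrite EM.
apply/andP; split.
  have [i ->] := maxv_ex hn mu.
  rewrite -lee_fin EM -EX expectation.unlock.
  apply: le_integral => //; first exact/Lfun1_integrable.
  by move=> w _; rewrite lee_fin; exact: maxv_ge.
apply/ler_addgt0Pr => e e0.
have n0 : (0 < n%:R :> R)%R by rewrite ltr0n.
pose eps := (4 * e / n%:R)%R.
have eps0 : (0 < eps)%R by rewrite divr_gt0// mulr_gt0.
pose c j := (v j + eps)%R.
have c0 j : (0 < c j)%R by rewrite /c; have := hv j; lra.
pose Y j := (X j - cst (mu j))%R.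
have Y2 j : Y j \in Lfun P 2%:E by rewrite L2B ?Lfun_cst.
have Y1 j : Y j \in Lfun P 1 by rewrite L1B ?Lfun_cst.
pose h j := ((4 * c j)^-1 \o* (Y j * Y j) + 2^-1 \o* Y j + cst (c j / 4))%R.
have h1 j : h j \in Lfun P 1.
  apply: L1D; last exact: Lfun_cst.
  by apply: L1D; apply: L1Z => //; exact: Lfun2_mul_Lfun1.
have hE j : 'E_P[h j] = ((4 * c j)^-1 * v j ^+ 2 + c j / 4)%:E.
  rewrite expectationD ?Lfun_cst//; last by apply: L1D; apply: L1Z => //; exact: Lfun2_mul_Lfun1.
  rewrite expectationD ?L1Z ?Lfun2_mul_Lfun1//.
  rewrite expectationZl ?Lfun2_mul_Lfun1// expectationZl//.
  by rewrite (centered2 (EX j) (VX j)) (centered1 (X2 j) (EX j)) mule0 adde0 expectation_cst.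
pose H := (cst (maxv mu) + \sum_(j < n) h j)%R.
have H1 : H \in Lfun P 1 by apply: L1D; [exact: Lfun_cst | exact: L1sum].
have EH : 'E_P[H] = (maxv mu + \sum_(j < n) ((4 * c j)^-1 * v j ^+ 2 + c j / 4))%:E.
  rewrite expectationD ?Lfun_cst ?L1sum// expectation_cst.
  rewrite -(big_map h xpredT id) expectation_sum; last first.
    by move=> Xi /mapP[j _ ->]; exact: h1.
  by rewrite big_map; under eq_bigr do rewrite hE; rewrite sumEFin.
have MH : 'E_P[M] <= 'E_P[H].
  rewrite expectation.unlock; apply: le_integral => //; first exact/Lfun1_integrable.
  move=> w _; rewrite lee_fin /H fctE fct_sumE /=.
  apply: (maxv_le hn) => i.
  have hw j : h j w = (Y j w * Y j w * (4 * c j)^-1 + Y j w * 2^-1 + c j / 4)%R.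
    by rewrite /h !fctE; reflexivity.
  have [hb0 hb1] := hbound (Y i w) (c0 i).
  rewrite (bigD1 i) //= hw.
  have : (0 <= \sum_(j < n | j != i) h j w)%R.
    by apply: sumr_ge0 => j _; rewrite hw; case: (hbound (Y j w) (c0 j)).
  have : (mu i <= maxv mu)%R by exact: maxv_ge.
  have : Y i w = (X i w - mu i)%R by rewrite /Y !fctE.
  lra.
move: MH; rewrite -EM EH lee_fin => /le_trans; apply.
rewrite -addrA lerD2l.
apply: (@le_trans _ _ (\sum_(j < n) (v j / 2 + eps / 4))%R).
  by apply: ler_sum => j _; exact: termbound.
rewrite big_split /= sumr_const card_ord -mulr_suml.
have n0' : (n%:R != 0 :> R)%R by rewrite gt_eqF.
have -> : (eps / 4 *+ n = e)%R by rewrite /eps -mulr_natr; field.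
lra.
Qed.
End boundC.

Section sumf.
Context d0 d1 (T0 : measurableType d0) (T1 : measurableType d1) (R : realType).
Variables (f0 : {mfun T0 >-> R}) (f1 : {mfun T1 >-> R}).
Definition sumf : sumT T0 T1 -> R :=
  fun w => match w with inl a => f0 a | inr b => f1 b end.
Lemma measurable_sumf : measurable_fun setT sumf.
Proof.
move=> _ B mB; rewrite setTI; split.
- by have := @measurable_funP _ _ _ _ setT f0 measurableT B mB; rewrite setTI.
- by have := @measurable_funP _ _ _ _ setT f1 measurableT B mB; rewrite setTI.
Qed.
HB.instance Definition _ := isMeasurableFun.Build _ _ _ _ sumf measurable_sumf.
End sumf.

Definition Sset (R : realType) (n : nat) (mu v : 'I_n -> R) : set (\bar R) :=
  [set e | exists (d : measure_display) (T : measurableType d)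
      (P : probability T R) (X : 'I_n -> {RV P >-> R}),
      (forall j, (X j : T -> R) \in Lfun P 2%:E) /\
      (forall j, ('E_P[X j] = (mu j)%:E)%E) /\
      (forall j, ('V_P[X j] = (v j ^+ 2)%:E)%E) /\
      (e = 'E_P[fun w => maxv (fun j => X j w)])%E].

Lemma fmaxE (R : realType) (n : nat) (mu v : 'I_n -> R) : fmax mu v = ereal_sup (Sset mu v).
Proof. reflexivity. Qed.

Section Smix.
Context (R : realType) (n : nat) (hn : (0 < n)%N).
Local Open Scope ereal_scope.

Lemma Smix (mu0 mu1 v0 v1 mu v : 'I_n -> R) e0 e1 :
  Sset mu0 v0 e0 -> Sset mu1 v1 e1 ->
  (forall j, mu j = 2^-1 * (mu0 j + mu1 j))%R ->
  (forall j, v j ^+ 2 = 2^-1 * ((v0 j ^+ 2 + (mu0 j - mu j) ^+ 2)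
                              + (v1 j ^+ 2 + (mu1 j - mu j) ^+ 2)))%R ->
  Sset mu v ((2^-1)%:E * (e0 + e1)).
Proof.
move=> [d0 [T0 [P0 [X0 [L0 [E0 [V0 ->]]]]]]] [d1 [T1 [P1 [X1 [L1 [E1 [V1 ->]]]]]]] hmu hv.
pose Q := mixP P0 P1.
pose X : 'I_n -> {RV Q >-> R} := fun j => sumf (X0 j) (X1 j).
have L01 j := Lfun_subset12 (Pfin P0) (L0 j).
have L11 j := Lfun_subset12 (Pfin P1) (L1 j).
have mX j : measurable_fun setT (X j) by exact: measurable_sumf.
have EXj j : 'E_Q[X j] = (mu j)%:E.
  transitivity ((2^-1)%:E * ('E_P0[X0 j] + 'E_P1[X1 j])).
    rewrite !expectation.unlock mix_int //.
    - exact: (proj1 (@Lfun1_integrable _ _ _ P0 (X0 j)) (L01 j)).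
    - exact: (proj1 (@Lfun1_integrable _ _ _ P1 (X1 j)) (L11 j)).
  by rewrite E0 E1 -EFinD -EFinM hmu.
exists default_measure_display, (sumT T0 T1), Q, X.
split; first by move=> j; apply: mix_L2 => //; [exact: L0 | exact: L1].
split; first exact: EXj.
split.
  move=> j; rewrite /variance covariance.unlock EXj /=.
  transitivity ((2^-1)%:E * ('E_P0[(X0 j - cst (mu j)) * (X0 j - cst (mu j))]%R
     + 'E_P1[(X1 j - cst (mu j)) * (X1 j - cst (mu j))]%R)).
    rewrite !expectation.unlock mix_int //.
    - apply: (proj1 (@Lfun1_integrable _ _ _ P0 ((X0 j - cst (mu j)) * (X0 j - cst (mu j)))%R)).
      by apply: Lfun2_mul_Lfun1; apply: L2B; first [exact: L0 | exact: L1 | exact: Lfun_cst].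
    - apply: (proj1 (@Lfun1_integrable _ _ _ P1 ((X1 j - cst (mu j)) * (X1 j - cst (mu j)))%R)).
      by apply: Lfun2_mul_Lfun1; apply: L2B; first [exact: L0 | exact: L1 | exact: Lfun_cst].
  rewrite (second_moment (L0 j) (E0 j) (V0 j)) (second_moment (L1 j) (E1 j) (V1 j)).
  by rewrite -EFinD -EFinM hv.
rewrite expectation.unlock mix_int //.
- exact: measurable_maxv.
- exact: (@maxv_int _ _ _ P0 _ hn (fun j => X0 j : T0 -> R) L01).
- exact: (@maxv_int _ _ _ P1 _ hn (fun j => X1 j : T1 -> R) L11).
Qed.

Lemma Scst (c : 'I_n -> R) : Sset c (fun=> 0%R) (maxv c)%:E.
Proof.
exists default_measure_display, unit, \d_tt, (fun j => cst (c j)).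
split; first by move=> j; exact: Lfun_cst.
split; first by move=> j; exact: expectation_cst.
split; first by move=> j; rewrite variance_cst expr0n.
by rewrite -[X in X = _](expectation_cst \d_tt (maxv c)).
Qed.

Lemma Sne (mu v : 'I_n -> R) : exists e, Sset mu v e.
Proof.
eexists; apply: (@Smix (fun j => mu j + v j)%R (fun j => mu j - v j)%R (fun=> 0%R) (fun=> 0%R)).
- exact: Scst.
- exact: Scst.
- by move=> j; field.
- by move=> j; field.
Qed.
End Smix.

Section suphalf.
Context (R : realType).
Local Open Scope ereal_scope.

Lemma sup_fin (S0 : set (\bar R)) (b0 : R) y0 :
  S0 y0 -> (forall x, S0 x -> exists r, x = r%:E /\ (r <= b0)%R) ->
  exists s0, ereal_sup S0 = s0%:E.
Proof.
move=> Sy0 F0.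
have ub : ereal_sup S0 <= b0%:E.
  by apply: ge_ereal_sup => x /F0 [r [-> ]]; rewrite lee_fin.
have lb : y0 <= ereal_sup S0 := ereal_sup_ubound Sy0.
have [r0 [ey0 _]] := F0 _ Sy0.
case E: (ereal_sup S0) => [s| |]; first by exists s.
- by move: ub; rewrite E leye_eq.
- by move: lb; rewrite E ey0 leeNy_eq.
Qed.

Lemma sup_half (S0 S1 S : set (\bar R)) (b0 b1 : R) :
  (exists x, S0 x) -> (exists x, S1 x) ->
  (forall x, S0 x -> exists r, x = r%:E /\ (r <= b0)%R) ->
  (forall x, S1 x -> exists r, x = r%:E /\ (r <= b1)%R) ->
  (forall x0 x1, S0 x0 -> S1 x1 -> S ((2^-1)%:E * (x0 + x1))) ->
  (2^-1)%:E * (ereal_sup S0 + ereal_sup S1) <= ereal_sup S.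
Proof.
move=> [y0 Sy0] [y1 Sy1] F0 F1 HS.
have [s0 E0] := sup_fin Sy0 F0.
have [s1 E1] := sup_fin Sy1 F1.
have [r0 [ey0 _]] := F0 _ Sy0.
have [r1 [ey1 _]] := F1 _ Sy1.
have lbS : (2^-1)%:E * (y0 + y1) <= ereal_sup S := ereal_sup_ubound (HS _ _ Sy0 Sy1).
rewrite E0 E1.
case ES: (ereal_sup S) => [s| |]; last 2 first.
- exact: leey.
- by move: lbS; rewrite ES ey0 ey1 leeNy_eq.
rewrite -EFinD -EFinM lee_fin.
apply/ler_addgt0Pr => e e0.
have [x0 S0x0 lt0] : exists2 x0, S0 x0 & (s0 - e)%:E < x0.
  by apply: ereal_sup_gt; rewrite E0 lte_fin; lra.
have [x1 S1x1 lt1] : exists2 x1, S1 x1 & (s1 - e)%:E < x1.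
  by apply: ereal_sup_gt; rewrite E1 lte_fin; lra.
have [q0 [eq0 _]] := F0 _ S0x0.
have [q1 [eq1 _]] := F1 _ S1x1.
have := ereal_sup_ubound (HS _ _ S0x0 S1x1).
rewrite ES eq0 eq1 -EFinD -EFinM lee_fin.
move: lt0 lt1; rewrite eq0 eq1 !lte_fin.
lra.
Qed.
End suphalf.

Unset Implicit Arguments.
Local Close Scope classical_set_scope.

Theorem lemma3p7 (R : realType) (n : nat) (hn : (0 < n)%N)
    (mu v : 'I_n -> R) (hv : forall j, 0 <= v j) :
  ((maxv mu)%:E <= fmax mu v /\
   fmax mu v <= (maxv mu + 2^-1 * \sum_(j < n) v j)%:E)%E /\
  (forall (mu0 mu1 v0 v1 : 'I_n -> R),
     (forall j, 0 <= v0 j) -> (forall j, 0 <= v1 j) ->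
     (forall j, mu j = 2^-1 * (mu0 j + mu1 j)) ->
     (forall j, v j ^+ 2 = 2^-1 * ((v0 j ^+ 2 + (mu0 j - mu j) ^+ 2)
                                 + (v1 j ^+ 2 + (mu1 j - mu j) ^+ 2))) ->
     ((2^-1)%:E * (fmax mu0 v0 + fmax mu1 v1) <= fmax mu v)%E).
Proof.
have bnd : forall (mu' v' : 'I_n -> R), (forall j, 0 <= v' j) -> forall e, Sset mu' v' e ->
    exists r, e = r%:E /\ (maxv mu' <= r <= maxv mu' + 2^-1 * \sum_(j < n) v' j).
  move=> mu' v' hv' e [d [T [P [X [L [E [V ->]]]]]]].
  exact: (@boundC _ _ _ P _ hn (fun j => X j : T -> R) mu' v' hv' L E V).
split; first split.
- have [e Se] := Sne hn mu v.
  have [r [er /andP[h1 _]]] := bnd _ _ hv _ Se.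
  rewrite fmaxE; apply: (le_trans _ (ereal_sup_ubound Se)).
  by rewrite er lee_fin.
- rewrite fmaxE; apply: ge_ereal_sup => e Se.
  have [r [-> /andP[_ h2]]] := bnd _ _ hv _ Se.
  by rewrite lee_fin.
move=> mu0 mu1 v0 v1 hv0 hv1 hmu hvv.
rewrite !fmaxE.
apply: (@sup_half _ _ _ _ (maxv mu0 + 2^-1 * \sum_(j < n) v0 j) (maxv mu1 + 2^-1 * \sum_(j < n) v1 j)).
- exact: Sne.
- exact: Sne.
- by move=> x /(bnd _ _ hv0) [r [-> /andP[_ h]]]; exists r.
- by move=> x /(bnd _ _ hv1) [r [-> /andP[_ h]]]; exists r.
- by move=> x0 x1 S0 S1; apply: (Smix hn S0 S1).
Qed.
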